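(* Consider the equation $$u_t+u_{xxxxx}+B(t)u_{xxx}+uu_{xxx}+E(t)uu_x+F\,u_xu_{xx}+Q(t)u=0 \qquad (2)$$ where $F$ is a nonzero constant and $B,E,Q$ are smooth functions of $t$. Then a vector field $\mathbf v=\tau\partial_t+\xi\partial_x+\eta\partial_u$ generates a Lie point symmetry group of (2) if and only if $$\tau=k_2t+k_3,\qquad \xi=\tfrac{k_2}{5}x+\delta(t),\qquad \eta=\sigma(t)-\tfrac{2k_2}{5}u$$ for constants $k_2,k_3$ and smooth functions $\delta(t),\sigma(t)$ satisfying $$5(k_2t+k_3)B_t+2k_2B+5\sigma=0,\quad (k_2t+k_3)E_t+\tfrac{2k_2}{5}E=0,\quad \sigma E-\delta_t=0,\quad \sigma Q+\sigma_t=0,\quad (k_2t+k_3)Q_t+k_2Q=0 .$$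
   Context: Lie point symmetries are determined by Lie's classical infinitesimal invariance criterion: the fifth prolongation of $\mathbf v$ applied to the left-hand side of (2) must vanish on solutions of (2). *)

(* Defs.v *)
From Stdlib Require Import Reals List.
From Coquelicot Require Import Coquelicot.
Open Scope R_scope.

Definition smooth1 (f : R -> R) : Prop :=
  forall (n : nat) (t : R), ex_derive (Derive_n f n) t.

Definition pt (f : R -> R -> R) : R -> R -> R :=
  fun t x => Derive (fun s => f s x) t.
Definition px (f : R -> R -> R) : R -> R -> R :=
  fun t x => Derive (fun y => f t y) x.

Fixpoint pd2 (ds : list bool) (f : R -> R -> R) : R -> R -> R :=
  match ds with
  | nil => f
  | b :: ds' => (if b then pt else px) (pd2 ds' f)
  end.

Definition smooth2 (f : R -> R -> R) : Prop :=
  forall (ds : list bool) (t x : R),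
    ex_derive (fun s => pd2 ds f s x) t /\
    ex_derive (fun y => pd2 ds f t y) x /\
    continuous (fun p : R * R => pd2 ds f (fst p) (snd p)) (t, x).

Inductive dir3 := Dt | Dx | Du.

Definition pd3_one (d : dir3) (f : R -> R -> R -> R) : R -> R -> R -> R :=
  match d with
  | Dt => fun t x u => Derive (fun s => f s x u) t
  | Dx => fun t x u => Derive (fun y => f t y u) x
  | Du => fun t x u => Derive (fun w => f t x w) u
  end.

Fixpoint pd3 (ds : list dir3) (f : R -> R -> R -> R) : R -> R -> R -> R :=
  match ds with
  | nil => f
  | d :: ds' => pd3_one d (pd3 ds' f)
  end.

Definition smooth3 (f : R -> R -> R -> R) : Prop :=
  forall (ds : list dir3) (t x u : R),
    ex_derive (fun s => pd3 ds f s x u) t /\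
    ex_derive (fun y => pd3 ds f t y u) x /\
    ex_derive (fun w => pd3 ds f t x w) u /\
    continuous (fun p : R * R * R => pd3 ds f (fst (fst p)) (snd (fst p)) (snd p))
      ((t, x), u).

Fixpoint pxn (n : nat) (f : R -> R -> R) : R -> R -> R :=
  match n with
  | O => f
  | S n' => px (pxn n' f)
  end.

Definition Delta (B E Q : R -> R) (F : R) (u : R -> R -> R) (t x : R) : R :=
  pt u t x + pxn 5 u t x + B t * pxn 3 u t x + u t x * pxn 3 u t x
  + E t * u t x * px u t x + F * px u t x * pxn 2 u t x + Q t * u t x.

(** For v = tau d_t + xi d_x + eta d_u, the characteristic along u is
    Qc = eta - tau u_t - xi u_x, and the prolonged coefficients are
    phi^J = D_J Qc + tau u_{J t} + xi u_{J x}  (Olver, Thm 2.36),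
    where on the jet of a function u the total derivatives D_J are the
    ordinary partial derivatives of the composite functions. *)
Section Prolong.
Variables (tau xi eta : R -> R -> R -> R) (u : R -> R -> R).

Definition charQ : R -> R -> R := fun t x =>
  eta t x (u t x) - tau t x (u t x) * pt u t x - xi t x (u t x) * px u t x.

Definition phi_xn (k : nat) : R -> R -> R := fun t x =>
  pxn k charQ t x + tau t x (u t x) * pxn k (pt u) t x
  + xi t x (u t x) * pxn (S k) u t x.

Definition phi_t : R -> R -> R := fun t x =>
  pt charQ t x + tau t x (u t x) * pt (pt u) t x
  + xi t x (u t x) * px (pt u) t x.
End Prolong.

Definition prDelta (B E Q : R -> R) (F : R) (tau xi eta : R -> R -> R -> R)
  (u : R -> R -> R) (t x : R) : R :=
  let U := u t x in
  let u1 := px u t x in let u2 := pxn 2 u t x in let u3 := pxn 3 u t x in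
  (* tau * dDelta/dt  (coefficients depend on t; dDelta/dx = 0) *)
  tau t x U * (Derive B t * u3 + Derive E t * U * u1 + Derive Q t * U)
  (* eta * dDelta/du *)
  + eta t x U * (u3 + E t * u1 + Q t)
  (* phi^J * dDelta/du_J *)
  + phi_t tau xi eta u t x * 1
  + phi_xn tau xi eta u 5 t x * 1
  + phi_xn tau xi eta u 3 t x * (B t + U)
  + phi_xn tau xi eta u 1 t x * (E t * U + F * u2)
  + phi_xn tau xi eta u 2 t x * (F * u1).

(** Lie's infinitesimal invariance criterion: pr^(5) v (Delta) = 0 whenever
    Delta = 0 on the jet space J^5.  Every point of J^5 is the 5-jet of a
    (polynomial, hence smooth) function u(t,x) at a point, so quantifying
    over smooth u and points (t,x) covers exactly J^5. *)
Definition is_lie_point_symmetry (B E Q : R -> R) (F : R)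
  (tau xi eta : R -> R -> R -> R) : Prop :=
  forall u : R -> R -> R, smooth2 u ->
  forall t x : R, Delta B E Q F u t x = 0 ->
    prDelta B E Q F tau xi eta u t x = 0.

(* Main.v *)
From Pilot Require Import Defs.
From Stdlib Require Import Reals Lra Lia List ZArith.
From Coquelicot Require Import Coquelicot.
Import Pilot.Defs.
Open Scope R_scope.
Import ListNotations.

Lemma const_of_deriv0 (f : R -> R) :
  (forall x, is_derive f x 0) -> forall a b, f a = f b.
Proof.
  intros H a b.
  destruct (MVT_gen f a b (fun _ => 0)) as [c [_ Hc]].
  - intros; apply H.
  - intros x _. apply (proj2 (continuity_pt_filterlim f x)). apply (ex_derive_continuous f x). eexists; apply H.
  - lra.
Qed.

Lemma deriv_zero_const (f : R -> R) :
  (forall x, ex_derive f x /\ Derive f x = 0) -> forall a b, f a = f b.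
Proof.
  intros H; apply const_of_deriv0. intros x; destruct (H x) as [He Hd].
  rewrite <- Hd; apply Derive_correct; auto.
Qed.

Lemma cont_pair {U V : UniformSpace} (p : U * V) :
  continuous (fun x0 : U * V => (fst x0, snd x0)) p.
Proof.
  apply (continuous_ext (fun x => x)). intros [a b]; reflexivity. apply continuous_id.
Qed.

Lemma cont_slice_xu (F : R -> R -> R -> R) t0 y w :
  continuous (fun p : R * R * R => F (fst (fst p)) (snd (fst p)) (snd p)) ((t0, y), w) ->
  continuous (fun z : R * R => F t0 (fst z) (snd z)) (y, w).
Proof.
  intros Hc.
  apply (continuous_comp (fun z : R * R => ((t0, fst z), snd z))
           (fun p : R * R * R => F (fst (fst p)) (snd (fst p)) (snd p))).
  - apply (continuous_comp_2 (fun z : R*R => (t0, fst z)) (fun z : R*R => snd z) (fun a b => (a,b))).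
    + apply (continuous_comp_2 (fun _ : R*R => t0) (fun z : R*R => fst z) (fun a b => (a,b))).
      * apply continuous_const.
      * apply continuous_fst.
      * apply cont_pair.
    + apply continuous_snd.
    + apply cont_pair.
  - exact Hc.
Qed.

Lemma cont_slice_tu (F : R -> R -> R -> R) s x0 w :
  continuous (fun p : R * R * R => F (fst (fst p)) (snd (fst p)) (snd p)) ((s, x0), w) ->
  continuous (fun z : R * R => F (fst z) x0 (snd z)) (s, w).
Proof.
  intros Hc.
  apply (continuous_comp (fun z : R * R => ((fst z, x0), snd z))
           (fun p : R * R * R => F (fst (fst p)) (snd (fst p)) (snd p))).
  - apply (continuous_comp_2 (fun z : R*R => (fst z, x0)) (fun z : R*R => snd z) (fun a b => (a,b))).
    + apply (continuous_comp_2 (fun z : R*R => fst z) (fun _ : R*R => x0) (fun a b => (a,b))).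
      * apply continuous_fst.
      * apply continuous_const.
      * apply cont_pair.
    + apply continuous_snd.
    + apply cont_pair.
  - exact Hc.
Qed.

Lemma chain2 (f fx fy : R -> R -> R) (h : R -> R) (y0 dh : R) :
  (forall a b, is_derive (fun z => f z b) a (fx a b)) ->
  (forall a b, is_derive (fun w => f a w) b (fy a b)) ->
  continuous (fun z : R * R => fx (fst z) (snd z)) (y0, h y0) ->
  is_derive h y0 dh ->
  is_derive (fun y => f y (h y)) y0 (fx y0 (h y0) + dh * fy y0 (h y0)).
Proof.
  intros Hx Hy Hc Hh.
  assert (Hd : differentiable_pt_lim f y0 (h y0) (fx y0 (h y0)) (fy y0 (h y0))).
  { apply filterdiff_differentiable_pt_lim.
    eapply filterdiff_ext_lin.
    - apply is_derive_filterdiff.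
      + apply filter_forall. intros [a b]; apply Hx.
      + apply Hy.
      + exact Hc.
    - intros [a b]. simpl. unfold plus, scal; simpl. unfold mult; simpl. reflexivity. }
  apply is_derive_Reals.
  pose proof (derivable_pt_lim_comp_2d f (fun y => y) h y0 _ _ 1 dh Hd) as K.
  replace (fx y0 (h y0) + dh * fy y0 (h y0)) with (fx y0 (h y0) * 1 + fy y0 (h y0) * dh) by ring.
  apply K.
  - apply derivable_pt_lim_id.
  - apply is_derive_Reals; exact Hh.
Qed.

Lemma pd3_app (l1 l2 : list dir3) G t x u :
  pd3 (l1 ++ l2) G t x u = pd3 l1 (pd3 l2 G) t x u.
Proof.
  revert t x u. induction l1 as [|d l1 IH]; intros; simpl; auto.
  destruct d; simpl; apply Derive_ext; intros; apply IH.
Qed.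

Lemma pd3_ext (l : list dir3) (G1 G2 : R -> R -> R -> R) :
  (forall t x u, G1 t x u = G2 t x u) -> forall t x u, pd3 l G1 t x u = pd3 l G2 t x u.
Proof.
  intros H. induction l as [|d l IH]; intros; simpl; auto.
  destruct d; simpl; apply Derive_ext; intros; apply IH.
Qed.

Lemma pd3_prefix (l1 l2 : list dir3) G :
  (forall t x u, pd3 l1 G t x u = pd3 l2 G t x u) ->
  forall ds t x u, pd3 (ds ++ l1) G t x u = pd3 (ds ++ l2) G t x u.
Proof.
  intros H ds t x u. rewrite !pd3_app. apply pd3_ext. exact H.
Qed.

Lemma pd3_zero_inner (l0 : list dir3) G :
  (forall t x u, pd3 l0 G t x u = 0) ->
  forall ds t x u, pd3 (ds ++ l0) G t x u = 0.
Proof.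
  intros H ds t x u. rewrite pd3_app.
  rewrite (pd3_ext ds _ (fun _ _ _ => 0) H).
  clear. revert t x u; induction ds as [|d ds IH]; intros; simpl; auto.
  destruct d; simpl; (erewrite Derive_ext; [apply Derive_const| intros; apply IH]).
Qed.

Section S3.
Variable G : R -> R -> R -> R.
Hypothesis HG : smooth3 G.

Lemma isd_x ds t a b : is_derive (fun z => pd3 ds G t z b) a (pd3 (Dx::ds) G t a b).
Proof. apply Derive_correct. apply (HG ds t a b). Qed.
Lemma isd_u ds t a b : is_derive (fun w => pd3 ds G t a w) b (pd3 (Du::ds) G t a b).
Proof. apply Derive_correct. apply (HG ds t a b). Qed.
Lemma isd_t ds x s b : is_derive (fun z => pd3 ds G z x b) s (pd3 (Dt::ds) G s x b).
Proof. apply Derive_correct. apply (HG ds s x b). Qed.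

Lemma chain_x ds t0 (h : R -> R) y0 dh :
  is_derive h y0 dh ->
  is_derive (fun y => pd3 ds G t0 y (h y)) y0
    (pd3 (Dx::ds) G t0 y0 (h y0) + dh * pd3 (Du::ds) G t0 y0 (h y0)).
Proof.
  intros Hh.
  apply (chain2 (fun y w => pd3 ds G t0 y w) (fun y w => pd3 (Dx::ds) G t0 y w)
                (fun y w => pd3 (Du::ds) G t0 y w)); auto.
  - intros; apply isd_x.
  - intros; apply isd_u.
  - apply (cont_slice_xu (pd3 (Dx::ds) G)). apply (HG (Dx::ds)).
Qed.

Lemma chain_t ds x0 (h : R -> R) s0 dh :
  is_derive h s0 dh ->
  is_derive (fun s => pd3 ds G s x0 (h s)) s0
    (pd3 (Dt::ds) G s0 x0 (h s0) + dh * pd3 (Du::ds) G s0 x0 (h s0)).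
Proof.
  intros Hh.
  apply (chain2 (fun s w => pd3 ds G s x0 w) (fun s w => pd3 (Dt::ds) G s x0 w)
                (fun s w => pd3 (Du::ds) G s x0 w)); auto.
  - intros; apply isd_t.
  - intros; apply isd_u.
  - apply (cont_slice_tu (pd3 (Dt::ds) G)). apply (HG (Dt::ds)).
Qed.

Lemma cont2d ds t a b : continuity_2d_pt (fun y w => pd3 ds G t y w) a b.
Proof.
  apply (proj2 (continuity_2d_pt_filterlim _ _ _)).
  apply (cont_slice_xu (pd3 ds G)). apply (HG ds).
Qed.

Lemma swap_xu ds t x u : pd3 (Dx::Du::ds) G t x u = pd3 (Du::Dx::ds) G t x u.
Proof.
  pose (f := fun z w => pd3 ds G t z w).
  assert (K := Schwarz f x u).
  simpl. unfold f in K. apply K.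
  - apply locally_2d_forall. intros a b. repeat split.
    + apply (HG ds t a b).
    + apply (HG ds t a b).
    + apply (HG (Du::ds) t a b).
    + apply (HG (Dx::ds) t a b).
  - apply (continuity_2d_pt_ext (fun y w => pd3 (Dx::Du::ds) G t y w)); [intros; reflexivity|].
    apply cont2d.
  - apply (continuity_2d_pt_ext (fun y w => pd3 (Du::Dx::ds) G t y w)); [intros; reflexivity|].
    apply cont2d.
Qed.

End S3.

Definition can (nx nu : nat) : list dir3 := repeat Dx nx ++ repeat Du nu.

Lemma can_swap G (HG : smooth3 G) nx nu t x u :
  pd3 (Du :: can nx nu) G t x u = pd3 (can nx (S nu)) G t x u.
Proof.
  revert t x u. induction nx as [|n IH]; intros t x u; [reflexivity|].
  unfold can. change (repeat Dx (S n)) with (Dx :: repeat Dx n).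
  change (pd3 (Du :: Dx :: (repeat Dx n ++ repeat Du nu)) G t x u =
          pd3 (Dx :: (repeat Dx n ++ repeat Du (S nu))) G t x u).
  rewrite <- (swap_xu G HG).
  simpl. apply Derive_ext; intros y. apply IH.
Qed.

Lemma isd_mult (f g : R -> R) x df dg :
  is_derive f x df -> is_derive g x dg ->
  is_derive (fun t => f t * g t) x (df * g x + f x * dg).
Proof.
  intros Hf Hg. apply (is_derive_mult f g x df dg Hf Hg). intros; apply Rmult_comm.
Qed.

Lemma isd_plus (f g : R -> R) x df dg :
  is_derive f x df -> is_derive g x dg ->
  is_derive (fun t => f t + g t) x (df + dg).
Proof. intros; apply (is_derive_plus f g); auto. Qed.

Lemma isd_const (a x : R) : is_derive (fun _ => a) x 0.
Proof. apply (is_derive_const a x). Qed.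

Lemma isd_eq (f : R -> R) x l1 l2 : is_derive f x l1 -> l1 = l2 -> is_derive f x l2.
Proof. intros H <-; exact H. Qed.

Ltac req := match goal with |- ?a = ?b => change (@eq R a b) end; cbv beta.

Inductive var := VA (g nx nu : nat) | VQ (k : nat) | VP (k : nat) | VT (g : nat) | VC (i : nat).

Record env := mkEnv { eA : nat -> nat -> nat -> R; eQ : nat -> R; eP : nat -> R;
                      eT : nat -> R; eC : nat -> R }.

Definition ivar (e : env) (v : var) : R :=
  match v with
  | VA g nx nu => eA e g nx nu
  | VQ k => eQ e k
  | VP k => eP e k
  | VT g => eT e g
  | VC i => eC e i
  end.

Fixpoint imono (e : env) (l : list var) : R :=
  match l with nil => 1 | v :: l' => ivar e v * imono e l' end.

Definition mono := (Z * list var)%type.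
Definition poly := list mono.

Fixpoint ipoly (e : env) (P : poly) : R :=
  match P with nil => 0 | m :: P' => IZR (fst m) * imono e (snd m) + ipoly e P' end.

Definition pscale (c : Z) (P : poly) : poly := map (fun m => ((c * fst m)%Z, snd m)) P.
Definition pmul (P Q : poly) : poly :=
  flat_map (fun m1 => map (fun m2 => ((fst m1 * fst m2)%Z, snd m1 ++ snd m2)) Q) P.

Definition dvar (v : var) : poly :=
  match v with
  | VA g nx nu => (1%Z, VA g (S nx) nu :: nil) :: (1%Z, VQ 1 :: VA g nx (S nu) :: nil) :: nil
  | VQ k => (1%Z, VQ (S k) :: nil) :: nil
  | VP k => (1%Z, VP (S k) :: nil) :: nil
  | _ => nil
  end.

Fixpoint dlist (l : list var) : poly :=
  match l with
  | nil => nil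
  | v :: l' => pmul (dvar v) ((1%Z, l') :: nil) ++ pmul ((1%Z, v :: nil) :: nil) (dlist l')
  end.

Definition dpoly (P : poly) : poly := flat_map (fun m => pscale (fst m) (dlist (snd m))) P.

Fixpoint dpow (k : nat) (P : poly) : poly :=
  match k with O => P | S k' => dpoly (dpow k' P) end.

Definition pfilter (z : var -> bool) (P : poly) : poly :=
  filter (fun m => negb (existsb z (snd m))) P.

Lemma imono_app e l1 l2 : imono e (l1 ++ l2) = imono e l1 * imono e l2.
Proof. induction l1; simpl; [ring| rewrite IHl1; ring]. Qed.

Lemma ipoly_app e P Q : ipoly e (P ++ Q) = ipoly e P + ipoly e Q.
Proof. induction P; simpl; [ring| rewrite IHP; ring]. Qed.

Lemma ipoly_pscale e c P : ipoly e (pscale c P) = IZR c * ipoly e P.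
Proof. induction P; simpl; [ring| rewrite IHP, mult_IZR; ring]. Qed.

Lemma ipoly_map1 e (m : mono) Q :
  ipoly e (map (fun m2 => ((fst m * fst m2)%Z, snd m ++ snd m2)) Q)
  = IZR (fst m) * imono e (snd m) * ipoly e Q.
Proof.
  induction Q as [|m2 Q IHQ]; simpl; [ring|]. rewrite IHQ, mult_IZR, imono_app. ring.
Qed.

Lemma ipoly_pmul e P Q : ipoly e (pmul P Q) = ipoly e P * ipoly e Q.
Proof.
  induction P as [|m P IH]; simpl; [ring|].
  rewrite ipoly_app, IH, ipoly_map1. ring.
Qed.

Lemma pfilter_sound e z P :
  (forall v, z v = true -> ivar e v = 0) -> ipoly e (pfilter z P) = ipoly e P.
Proof.
  intros Hz. induction P as [|m P IH]; simpl; auto.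
  destruct (existsb z (snd m)) eqn:E; simpl.
  - rewrite IH. apply existsb_exists in E. destruct E as [v [Hin Hv]].
    assert (imono e (snd m) = 0) as ->; [|ring].
    induction (snd m) as [|w l IHl]; simpl in *; [contradiction|].
    destruct Hin as [<-|Hin]; [rewrite (Hz _ Hv); ring| rewrite IHl; auto; ring].
  - rewrite IH; ring.
Qed.

Lemma dlist_cons v l : dlist (v :: l) = pmul (dvar v) ((1%Z, l) :: nil) ++ pmul ((1%Z, v :: nil) :: nil) (dlist l).
Proof. reflexivity. Qed.
Lemma dpoly_cons m P : dpoly (m :: P) = pscale (fst m) (dlist (snd m)) ++ dpoly P.
Proof. reflexivity. Qed.

Section Deriv.
Variable envAt : R -> env.
Hypothesis HdA : forall v y, is_derive (fun y => ivar (envAt y) v) y (ipoly (envAt y) (dvar v)).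

Lemma dlist_sound l y : is_derive (fun y => imono (envAt y) l) y (ipoly (envAt y) (dlist l)).
Proof.
  induction l as [|v l IH].
  - simpl; apply isd_const.
  - eapply isd_eq. apply (isd_mult _ _ y _ _ (HdA v y) IH).
    rewrite dlist_cons, ipoly_app, ipoly_pmul, ipoly_pmul. cbn [ipoly imono fst snd]. req; ring.
Qed.

Lemma dpoly_sound P y : is_derive (fun y => ipoly (envAt y) P) y (ipoly (envAt y) (dpoly P)).
Proof.
  induction P as [|m P IH].
  - simpl; apply isd_const.
  - eapply isd_eq. apply isd_plus; [|apply IH].
    apply (isd_mult (fun _ => IZR (fst m)) _ y _ _ (isd_const _ y) (dlist_sound (snd m) y)).
    rewrite dpoly_cons, ipoly_app, ipoly_pscale. simpl. req; ring.
Qed.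

Lemma dpow_sound (f : R -> R) P :
  (forall y, f y = ipoly (envAt y) P) ->
  forall k y, Derive_n f k y = ipoly (envAt y) (dpow k P).
Proof.
  intros H0 k. induction k as [|k IH]; intros y; simpl; auto.
  rewrite (Derive_ext _ _ _ IH). apply is_derive_unique. apply dpoly_sound.
Qed.
End Deriv.

Fixpoint jp (x0 : R) (l : list R) (n : nat) (y : R) : R :=
  match l with nil => 0 | c :: l' => c * (y - x0) ^ n / INR (fact n) + jp x0 l' (S n) y end.

Lemma jp_cons x0 c l n y : jp x0 (c :: l) n y = c * (y - x0) ^ n / INR (fact n) + jp x0 l (S n) y.
Proof. reflexivity. Qed.

Lemma jp_deriv x0 l : forall n (y : R), is_derive (jp x0 l (S n)) y (jp x0 l n y).
Proof.
  induction l as [|c l IH]; intros n y.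
  - apply isd_const.
  - apply (is_derive_ext (fun y => c * (y - x0) ^ (S n) / INR (fact (S n)) + jp x0 l (S (S n)) y)).
    { intros; symmetry; apply jp_cons. }
    rewrite jp_cons.
    apply isd_plus; [|apply IH].
    apply (is_derive_ext (fun y => (c / INR (fact (S n))) * (y - x0) ^ S n)).
    { intros; unfold Rdiv; req; ring. }
    auto_derive; auto.
    change (match n with 0%nat => 1 | S _ => INR n + 1 end) with (INR (S n)).
    rewrite plus_INR, mult_INR.
    assert (INR (fact n) <> 0) by (apply not_0_INR, fact_neq_0).
    assert (INR (S n) <> 0) by (apply not_0_INR; lia).
    rewrite S_INR in *. req. replace (y + - x0) with (y - x0) by ring. field. split; auto.
    replace (INR (fact n) + INR n * INR (fact n)) with ((INR n + 1) * INR (fact n)) by ring.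
    apply Rmult_integral_contrapositive; auto.
Qed.

Lemma jp0_deriv x0 l y : is_derive (jp x0 l 0) y (jp x0 (tl l) 0 y).
Proof.
  destruct l as [|c l]; simpl.
  - apply isd_const.
  - eapply isd_eq. apply isd_plus; [apply isd_const| apply jp_deriv]. req; ring.
Qed.

Lemma jp_Dn x0 l k y : Derive_n (jp x0 l 0) k y = jp x0 (skipn k l) 0 y.
Proof.
  revert l y. induction k as [|k IH]; intros l y; [reflexivity|].
  simpl Derive_n. rewrite (Derive_ext _ _ _ (IH l)).
  rewrite (is_derive_unique _ _ _ (jp0_deriv x0 (skipn k l) y)).
  f_equal. clear. revert l; induction k; intros [|c l]; simpl; auto.
Qed.

Lemma jp_at x0 l n : jp x0 l (S n) x0 = 0.
Proof.
  revert n; induction l as [|c l IH]; intros n; [reflexivity|].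
  rewrite jp_cons, IH, Rminus_diag, pow_i by lia. unfold Rdiv; ring.
Qed.

Lemma jp_at0 x0 l : jp x0 l 0 x0 = nth 0 l 0.
Proof. destruct l as [|c l]; [reflexivity|]. rewrite jp_cons, jp_at. simpl. field. Qed.

Lemma jp_Dn_at x0 l k : Derive_n (jp x0 l 0) k x0 = nth k l 0.
Proof.
  rewrite jp_Dn, jp_at0. revert l; induction k; intros [|c l]; simpl; auto.
Qed.

Lemma jp_smooth x0 l : smooth1 (jp x0 l 0).
Proof.
  intros n t. apply (ex_derive_ext (jp x0 (skipn n l) 0)).
  - intros; symmetry; apply jp_Dn.
  - eexists; apply jp0_deriv.
Qed.

Lemma s1_isd (q : R -> R) (Hq : smooth1 q) k y :
  is_derive (Derive_n q k) y (Derive_n q (S k) y).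
Proof. apply Derive_correct. apply Hq. Qed.

Lemma s1_cont (q : R -> R) (Hq : smooth1 q) k y : continuous (Derive_n q k) y.
Proof. apply (ex_derive_continuous (Derive_n q k) y). apply Hq. Qed.

Lemma pd2_app l1 l2 f t x : pd2 (l1 ++ l2) f t x = pd2 l1 (pd2 l2 f) t x.
Proof.
  revert t x; induction l1 as [|b l IH]; intros; simpl; auto.
  destruct b; unfold pt, px; apply Derive_ext; intros; apply IH.
Qed.

Lemma pxn_pd2 k f t x : pxn k f t x = pd2 (repeat false k) f t x.
Proof.
  revert t x; induction k as [|k IH]; intros; simpl; auto.
  unfold px; apply Derive_ext; intros; apply IH.
Qed.

Lemma pxn_Dn k f t x : pxn k f t x = Derive_n (fun y => f t y) k x.
Proof.
  revert x; induction k as [|k IH]; intros; simpl; auto.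
  unfold px; apply Derive_ext; intros; apply IH.
Qed.

Section TestU.
Variables (q p : R -> R) (t0 : R).
Hypotheses (Hq : smooth1 q) (Hp : smooth1 p).
Definition ut (s y : R) : R := q y + (s - t0) * p y.

Fixpoint cntT (ds : list bool) : nat := match ds with nil => O | b :: l => (if b then S (cntT l) else cntT l) end.
Fixpoint cntX (ds : list bool) : nat := match ds with nil => O | b :: l => (if b then cntX l else S (cntX l)) end.

Definition ufor (ds : list bool) (s y : R) : R :=
  match cntT ds with
  | O => Derive_n q (cntX ds) y + (s - t0) * Derive_n p (cntX ds) y
  | 1%nat => Derive_n p (cntX ds) y
  | _ => 0
  end.

Lemma pd2_ut ds s y : pd2 ds ut s y = ufor ds s y.
Proof.
  revert s y; induction ds as [|b ds IH]; intros s y.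
  - unfold ufor; simpl. unfold ut; reflexivity.
  - simpl pd2. destruct b.
    + unfold pt. rewrite (Derive_ext _ _ _ (fun s => IH s y)).
      unfold ufor; simpl cntT; simpl cntX.
      destruct (cntT ds) as [|[|n]].
      * apply is_derive_unique. auto_derive; auto. req; ring.
      * apply Derive_const.
      * apply Derive_const.
    + unfold px. rewrite (Derive_ext _ _ _ (fun y => IH s y)).
      unfold ufor; simpl cntT; simpl cntX.
      destruct (cntT ds) as [|[|n]].
      * apply is_derive_unique. eapply isd_eq.
        apply isd_plus; [apply s1_isd; auto|]. apply isd_mult; [apply isd_const|apply s1_isd; auto].
        req; ring.
      * apply is_derive_unique. apply s1_isd; auto.
      * apply Derive_const.
Qed.

Lemma ut_smooth : smooth2 ut.
Proof.
  intros ds t x. split; [|split].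
  - apply (ex_derive_ext (fun s => ufor ds s x)); [intros; symmetry; apply pd2_ut|].
    unfold ufor. destruct (cntT ds) as [|[|n]]; [auto_derive; auto|eexists; apply isd_const..].
  - apply (ex_derive_ext (fun y => ufor ds t y)); [intros; symmetry; apply pd2_ut|].
    unfold ufor. destruct (cntT ds) as [|[|n]]; [|eexists; apply s1_isd; auto|eexists; apply isd_const].
    + eexists. apply isd_plus; [apply s1_isd; auto|]. apply isd_mult; [apply isd_const|apply s1_isd; auto].
  - apply (continuous_ext (fun z : R * R => ufor ds (fst z) (snd z))).
    { intros [a b]; symmetry; apply pd2_ut. }
    unfold ufor. destruct (cntT ds) as [|[|n]].
    + apply (continuous_plus (fun z : R*R => Derive_n q (cntX ds) (snd z))
                             (fun z : R*R => (fst z - t0) * Derive_n p (cntX ds) (snd z))).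
      * apply (continuous_comp snd (Derive_n q (cntX ds))); [apply continuous_snd| apply s1_cont; auto].
      * apply (continuous_mult (fun z : R*R => fst z - t0) (fun z : R*R => Derive_n p (cntX ds) (snd z))).
        -- apply (continuous_minus (fun z : R*R => fst z) (fun z : R*R => t0)); [apply continuous_fst|apply continuous_const].
        -- apply (continuous_comp snd (Derive_n p (cntX ds))); [apply continuous_snd| apply s1_cont; auto].
    + apply (continuous_comp snd (Derive_n p (cntX ds))); [apply continuous_snd| apply s1_cont; auto].
    + apply continuous_const.
Qed.

Lemma cnt_repeat k : cntT (repeat false k) = O /\ cntX (repeat false k) = k.
Proof. induction k; simpl; auto. destruct IHk as [-> ->]; auto. Qed.
Lemma cnt_repeat1 k : cntT (repeat false k ++ true :: nil) = 1%nat /\ cntX (repeat false k ++ true :: nil) = k.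
Proof. induction k; simpl; auto. destruct IHk as [-> ->]; auto. Qed.

Lemma ut_at y : ut t0 y = q y.
Proof. unfold ut; ring. Qed.
Lemma ut_t s y : pt ut s y = p y.
Proof. apply (pd2_ut (true :: nil)). Qed.
Lemma ut_x s y : px ut s y = Derive q y + (s - t0) * Derive p y.
Proof. apply (pd2_ut (false :: nil)). Qed.
Lemma ut_xn k y : pxn k ut t0 y = Derive_n q k y.
Proof.
  rewrite pxn_pd2, pd2_ut. unfold ufor. destruct (cnt_repeat k) as [-> ->]. ring.
Qed.
Lemma ut_txn k y : pxn k (pt ut) t0 y = Derive_n p k y.
Proof.
  rewrite pxn_pd2. rewrite <- (pd2_app (repeat false k) (true::nil) ut).
  rewrite pd2_ut. unfold ufor. destruct (cnt_repeat1 k) as [-> ->]. reflexivity.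
Qed.
Lemma ut_tt s y : pt (pt ut) s y = 0.
Proof. apply (pd2_ut (true :: true :: nil)). Qed.
Lemma ut_xt s y : px (pt ut) s y = Derive p y.
Proof. apply (pd2_ut (false :: true :: nil)). Qed.

End TestU.

Definition Gf (tau xi eta : R -> R -> R -> R) (g : nat) :=
  match g with O => tau | 1%nat => xi | _ => eta end.

Definition e0 : poly := [(1%Z, [VA 2 0 0]); ((-1)%Z, [VA 0 0 0; VP 0]); ((-1)%Z, [VA 1 0 0; VQ 1])].

Definition phiP (k : nat) : poly := dpow k e0 ++ [(1%Z, [VA 0 0 0; VP k]); (1%Z, [VA 1 0 0; VQ (S k)])].

Definition PHIT : poly :=
  [(1%Z, [VT 2]); (1%Z, [VP 0; VA 2 0 1]); ((-1)%Z, [VT 0; VP 0]); ((-1)%Z, [VP 0; VA 0 0 1; VP 0]);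
   ((-1)%Z, [VT 1; VQ 1]); ((-1)%Z, [VP 0; VA 1 0 1; VQ 1]); ((-1)%Z, [VA 1 0 0; VP 1]); (1%Z, [VA 1 0 0; VP 1])].

Definition PD : poly :=
  pmul [(1%Z, [VA 0 0 0])] [(1%Z, [VC 3; VQ 3]); (1%Z, [VC 4; VQ 0; VQ 1]); (1%Z, [VC 5; VQ 0])]
  ++ pmul [(1%Z, [VA 2 0 0])] [(1%Z, [VQ 3]); (1%Z, [VC 1; VQ 1]); (1%Z, [VC 2])]
  ++ PHIT
  ++ phiP 5
  ++ pmul (phiP 3) [(1%Z, [VC 0]); (1%Z, [VQ 0])]
  ++ pmul (phiP 1) [(1%Z, [VC 1; VQ 0]); (1%Z, [VC 6; VQ 2])]
  ++ pmul (phiP 2) [(1%Z, [VC 6; VQ 1])].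

Definition envPt (B E Q : R -> R) (F : R) (tau xi eta : R -> R -> R -> R) (t0 x0 : R) (lq lp : list R) : env :=
  mkEnv (fun g nx nu => pd3 (can nx nu) (Gf tau xi eta g) t0 x0 (nth 0 lq 0))
        (fun k => nth k lq 0) (fun k => nth k lp 0)
        (fun g => pd3 [Dt] (Gf tau xi eta g) t0 x0 (nth 0 lq 0))
        (fun i => nth i [B t0; E t0; Q t0; Derive B t0; Derive E t0; Derive Q t0; F] 0).

Lemma ipoly_ext e1 e2 P : (forall v, ivar e1 v = ivar e2 v) -> ipoly e1 P = ipoly e2 P.
Proof.
  intros H. induction P as [|[c l] P IH]; simpl; auto. rewrite IH. f_equal. f_equal.
  induction l; simpl; auto. rewrite H, IHl; auto.
Qed.

Lemma isd_minus (f g : R -> R) x df dg :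
  is_derive f x df -> is_derive g x dg ->
  is_derive (fun t => f t - g t) x (df - dg).
Proof. intros; apply (is_derive_minus f g); auto. Qed.

Section Master.
Variables (B E Q : R -> R) (F : R) (tau xi eta : R -> R -> R -> R).
Hypotheses (Ht : smooth3 tau) (Hx : smooth3 xi) (He : smooth3 eta).
Hypothesis Hsym : is_lie_point_symmetry B E Q F tau xi eta.

Lemma Gf_smooth g : smooth3 (Gf tau xi eta g).
Proof. destruct g as [|[|g]]; simpl; auto. Qed.

Variables (t0 x0 : R) (lq lp : list R).
Let q := jp x0 lq 0.
Let p := jp x0 lp 0.
Let u := ut q p t0.

Let envAt (y : R) : env :=
  mkEnv (fun g nx nu => pd3 (can nx nu) (Gf tau xi eta g) t0 y (q y))
        (fun k => Derive_n q k y) (fun k => Derive_n p k y)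
        (eT (envPt B E Q F tau xi eta t0 x0 lq lp)) (eC (envPt B E Q F tau xi eta t0 x0 lq lp)).

Lemma envAt_d v y : is_derive (fun y => ivar (envAt y) v) y (ipoly (envAt y) (dvar v)).
Proof.
  destruct v as [g nx nu|k|k|g|i]; simpl.
  - eapply isd_eq. apply (chain_x _ (Gf_smooth g)). apply (s1_isd q (jp_smooth x0 lq) 0).
    rewrite (can_swap _ (Gf_smooth g)). unfold can. simpl. req. ring.
  - eapply isd_eq. apply (s1_isd q (jp_smooth x0 lq)). simpl. req; ring.
  - eapply isd_eq. apply (s1_isd p (jp_smooth x0 lp)). simpl. req; ring.
  - apply isd_const.
  - apply isd_const.
Qed.

Lemma envAt_x0 v : ivar (envAt x0) v = ivar (envPt B E Q F tau xi eta t0 x0 lq lp) v.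
Proof.
  destruct v; simpl; auto.
  - unfold q; rewrite jp_at0; auto.
  - apply jp_Dn_at.
  - apply jp_Dn_at.
Qed.

Lemma charQ_base y : charQ tau xi eta u t0 y = ipoly (envAt y) e0.
Proof.
  unfold charQ, u. rewrite ut_at, ut_t, ut_x by (apply jp_smooth).
  simpl. replace (t0 - t0) with 0 by ring. change (Derive (fun x : R => q x) y) with (Derive q y). ring.
Qed.

Lemma Lx k : pxn k (charQ tau xi eta u) t0 x0 = ipoly (envPt B E Q F tau xi eta t0 x0 lq lp) (dpow k e0).
Proof.
  rewrite pxn_Dn. rewrite (dpow_sound envAt envAt_d (fun y => charQ tau xi eta u t0 y) e0 charQ_base k x0).
  apply ipoly_ext, envAt_x0.
Qed.

Lemma Lt : phi_t tau xi eta u t0 x0 = ipoly (envPt B E Q F tau xi eta t0 x0 lq lp) PHIT.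
Proof.
  unfold phi_t. unfold u. rewrite ut_tt, ut_xt by apply jp_smooth.
  unfold pt at 1.
  set (h := fun s => q x0 + (s - t0) * p x0).
  rewrite (Derive_ext _ (fun s => pd3 [] eta s x0 (h s) - pd3 [] tau s x0 (h s) * p x0
                               - pd3 [] xi s x0 (h s) * (Derive q x0 + (s - t0) * Derive p x0))).
  2:{ intros s. unfold charQ. rewrite ut_t, ut_x by apply jp_smooth. reflexivity. }
  assert (Hh : is_derive h t0 (p x0)).
  { unfold h. auto_derive; auto. req; ring. }
  erewrite is_derive_unique.
  2:{ apply isd_minus; [apply isd_minus|].
      - apply (chain_t _ He _ _ _ _ _ Hh).
      - apply isd_mult; [apply (chain_t _ Ht _ _ _ _ _ Hh)| apply isd_const].
      - apply isd_mult; [apply (chain_t _ Hx _ _ _ _ _ Hh)|].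
        auto_derive; auto. }
  unfold h. replace (t0 - t0) with 0 by ring. rewrite Rmult_0_l, Rplus_0_r.
  unfold ut. replace (t0 - t0) with 0 by ring. rewrite Rmult_0_l, Rplus_0_r.
  unfold q, p. rewrite jp_at0, jp_at0.
  change (Derive (jp x0 lq 0) x0) with (Derive_n (jp x0 lq 0) 1 x0).
  change (Derive (jp x0 lp 0) x0) with (Derive_n (jp x0 lp 0) 1 x0).
  rewrite !jp_Dn_at.
  simpl. unfold minus, plus, opp, mult, one, zero; simpl. rewrite !Rmult_0_l, !Rplus_0_r. req. ring.
Qed.

Lemma Lu0 : u t0 x0 = nth 0 lq 0.
Proof. unfold u; rewrite ut_at; apply jp_at0. Qed.
Lemma Lun k : pxn k u t0 x0 = nth k lq 0.
Proof. unfold u; rewrite ut_xn by apply jp_smooth. apply jp_Dn_at. Qed.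
Lemma Lu1 : px u t0 x0 = nth 1 lq 0.
Proof. apply (Lun 1). Qed.
Lemma Lut : pt u t0 x0 = nth 0 lp 0.
Proof. unfold u; rewrite ut_t by apply jp_smooth. apply jp_at0. Qed.
Lemma Lutn k : pxn k (pt u) t0 x0 = nth k lp 0.
Proof. unfold u; rewrite ut_txn by apply jp_smooth. apply jp_Dn_at. Qed.

Definition DeltaCond : Prop :=
  nth 0 lp 0 + nth 5 lq 0 + B t0 * nth 3 lq 0 + nth 0 lq 0 * nth 3 lq 0
  + E t0 * nth 0 lq 0 * nth 1 lq 0 + F * nth 1 lq 0 * nth 2 lq 0 + Q t0 * nth 0 lq 0 = 0.

Lemma master_eq : DeltaCond -> ipoly (envPt B E Q F tau xi eta t0 x0 lq lp) PD = 0.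
Proof.
  intros HD.
  assert (Hsm : smooth2 u) by (apply ut_smooth; apply jp_smooth).
  assert (HDel : Delta B E Q F u t0 x0 = 0).
  { unfold Delta. rewrite Lut, Lu0, Lu1, !Lun. exact HD. }
  pose proof (Hsym u Hsm t0 x0 HDel) as H.
  unfold prDelta in H. cbv zeta in H.
  unfold phi_xn in H. rewrite !Lx, Lt, !Lutn, !Lun, Lu1, Lu0 in H.
  rewrite <- H. unfold PD, phiP.
  rewrite !ipoly_app, !ipoly_pmul, !ipoly_app.
  cbn [ipoly imono ivar envPt eA eQ eP eT eC fst snd nth pd3 can repeat app Gf].
  ring.
Qed.

End Master.

Lemma repeat_snoc {A} (a : A) n : repeat a (S n) = repeat a n ++ [a].
Proof. induction n; simpl; auto. rewrite <- IHn. reflexivity. Qed.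

Lemma can_u1 nx nu : can nx (S nu) = (repeat Dx nx ++ repeat Du nu) ++ [Du].
Proof. unfold can. rewrite repeat_snoc, app_assoc. reflexivity. Qed.
Lemma can_x1 nx : can (S nx) 0 = repeat Dx nx ++ [Dx].
Proof. unfold can. simpl repeat at 2. rewrite app_nil_r. apply repeat_snoc. Qed.
Lemma can_u2 nx nu : can nx (S (S nu)) = (repeat Dx nx ++ repeat Du nu) ++ [Du; Du].
Proof. rewrite can_u1. unfold can. rewrite repeat_snoc, <- !app_assoc. reflexivity. Qed.
Lemma can_x1u1 nx : can (S nx) 1 = repeat Dx nx ++ [Dx; Du].
Proof. unfold can. rewrite repeat_snoc, <- app_assoc. reflexivity. Qed.
Lemma can_x2 nx : can (S (S nx)) 0 = repeat Dx nx ++ [Dx; Dx].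
Proof. rewrite can_x1, repeat_snoc, <- app_assoc. reflexivity. Qed.

Lemma slice_Dn G (HG : smooth3 G) a b n t :
  Derive_n (fun s => G s a b) n t = pd3 (repeat Dt n) G t a b.
Proof.
  revert t; induction n as [|n IH]; intros t; [reflexivity|].
  simpl. apply Derive_ext. intros; apply IH.
Qed.

Lemma slice_smooth G (HG : smooth3 G) a b : smooth1 (fun s => G s a b).
Proof.
  intros n t. apply (ex_derive_ext (fun s => pd3 (repeat Dt n) G s a b)).
  - intros; symmetry; apply slice_Dn; auto.
  - apply (HG (repeat Dt n) t a b).
Qed.

Section Stages.
Variables (B E Q : R -> R) (F : R) (tau xi eta : R -> R -> R -> R).
Hypotheses (Ht : smooth3 tau) (Hx : smooth3 xi) (He : smooth3 eta).
Hypothesis Hsym : is_lie_point_symmetry B E Q F tau xi eta.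

Notation EN := (envPt B E Q F tau xi eta).

Lemma stage (z : var -> bool) t0 x0 lq lp L :
  pfilter z PD = L ->
  (forall v, z v = true -> ivar (EN t0 x0 lq lp) v = 0) ->
  DeltaCond B E Q F t0 lq lp -> ipoly (EN t0 x0 lq lp) L = 0.
Proof. intros HL Hz HD. rewrite <- HL, pfilter_sound; auto. apply master_eq; auto. Qed.

Ltac get_stage H z t0 x0 lq lp :=
  let L := eval vm_compute in (pfilter z PD) in
  assert (H : ipoly (EN t0 x0 lq lp) L = 0);
  [ apply (stage z t0 x0 lq lp L); [vm_compute; reflexivity | | unfold DeltaCond; simpl; ring]
  | cbn [ipoly imono ivar fst snd envPt eA eQ eP eT eC nth] in H ].

Ltac nthz k Hk :=
  do 8 (destruct k as [|k]; [simpl in Hk |- *; first [discriminate | reflexivity] |]);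
  destruct k; reflexivity.

Definition z1 (v : var) : bool :=
  match v with VQ k => Nat.leb 2 k | VP k => Nat.leb 1 k && negb (Nat.eqb k 4) | _ => false end.

Lemma S1 t x U : pd3 [Dx] tau t x U = 0 /\ pd3 [Du] tau t x U = 0.
Proof.
  assert (Hz : forall a b, forall v, z1 v = true -> ivar (EN t x [U; a] [-(E t * U * a + Q t * U); 0; 0; 0; b]) v = 0).
  { intros a b [g nx nu|k|k|g|i] Hk; cbn [z1] in Hk; try discriminate; cbn [ivar envPt eQ eP]; nthz k Hk. }
  get_stage H01 z1 t x [U; 0] [-(E t * U * 0 + Q t * U); 0; 0; 0; 1].
  { apply Hz. }
  get_stage H00 z1 t x [U; 0] [-(E t * U * 0 + Q t * U); 0; 0; 0; 0].
  { apply Hz. }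
  get_stage H11 z1 t x [U; 1] [-(E t * U * 1 + Q t * U); 0; 0; 0; 1].
  { apply Hz. }
  get_stage H10 z1 t x [U; 1] [-(E t * U * 1 + Q t * U); 0; 0; 0; 0].
  { apply Hz. }
  change (pd3 [Dx] tau t x U) with (pd3 (can 1 0) (Gf tau xi eta 0) t x U).
  change (pd3 [Du] tau t x U) with (pd3 (can 0 1) (Gf tau xi eta 0) t x U).
  split; lra.
Qed.

Definition T t := tau t 0 0.

Lemma const2 (f : R -> R -> R) (fx fu : R -> R -> R) :
  (forall a b, is_derive (fun z => f z b) a (fx a b)) ->
  (forall a b, is_derive (fun w => f a w) b (fu a b)) ->
  (forall a b, fx a b = 0) -> (forall a b, fu a b = 0) ->
  forall a b, f a b = f 0 0.
Proof.
  intros H1 H2 H3 H4 a b.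
  rewrite (const_of_deriv0 (fun z => f z b) ltac:(intros; eapply isd_eq; [apply H1| apply H3]) a 0).
  apply (const_of_deriv0 (fun w => f 0 w) ltac:(intros; eapply isd_eq; [apply H2| apply H4]) b 0).
Qed.

Lemma tau_T t x u : tau t x u = T t.
Proof.
  unfold T. apply (const2 (fun y w => pd3 [] tau t y w) (fun y w => pd3 [Dx] tau t y w) (fun y w => pd3 [Du] tau t y w)).
  - intros; apply (isd_x tau Ht []).
  - intros; apply (isd_u tau Ht []).
  - intros; cbv beta; apply (proj1 (S1 _ _ _)).
  - intros; cbv beta; apply (proj2 (S1 _ _ _)).
Qed.

Lemma Z0 nx nu t x u : (1 <= nx + nu)%nat -> pd3 (can nx nu) tau t x u = 0.
Proof.
  intros Hn. destruct nu as [|nu].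
  - destruct nx as [|nx]; [lia|]. rewrite can_x1. apply pd3_zero_inner. intros; apply (proj1 (S1 _ _ _)).
  - rewrite can_u1. apply pd3_zero_inner. intros; apply (proj2 (S1 _ _ _)).
Qed.

Lemma VT0 t x u : pd3 [Dt] tau t x u = Derive T t.
Proof. simpl. apply Derive_ext. intros; apply tau_T. Qed.

Ltac zvq k Hk := cbn [ivar envPt eQ eP]; nthz k Hk.

Definition z2 (v : var) : bool :=
  match v with
  | VQ k => Nat.leb 2 k && negb (Nat.eqb k 5)
  | VP k => Nat.leb 1 k
  | VA 0 nx nu => Nat.leb 1 (nx + nu)
  | _ => false end.

Lemma S2 t x U : pd3 [Du] xi t x U = 0 /\ pd3 [Dt] tau t x U = 5 * pd3 [Dx] xi t x U.
Proof.
  assert (Hz : forall a c, forall v, z2 v = true -> ivar (EN t x [U; a; 0; 0; 0; c] [-(c + E t * U * a + Q t * U)]) v = 0).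
  { intros a c [g nx nu|k|k|g|i] Hk; cbn [z2] in Hk; try discriminate; try (zvq k Hk).
    destruct g as [|g]; try discriminate. apply Nat.leb_le in Hk. cbn [ivar envPt eA]. apply Z0; auto. }
  get_stage H01 z2 t x [U; 0; 0; 0; 0; 1] [-(1 + E t * U * 0 + Q t * U)]. { apply Hz. }
  get_stage H00 z2 t x [U; 0; 0; 0; 0; 0] [-(0 + E t * U * 0 + Q t * U)]. { apply Hz. }
  get_stage H11 z2 t x [U; 1; 0; 0; 0; 1] [-(1 + E t * U * 1 + Q t * U)]. { apply Hz. }
  get_stage H10 z2 t x [U; 1; 0; 0; 0; 0] [-(0 + E t * U * 1 + Q t * U)]. { apply Hz. }
  change (pd3 [Dx] xi t x U) with (pd3 (can 1 0) (Gf tau xi eta 1) t x U).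
  change (pd3 [Du] xi t x U) with (pd3 (can 0 1) (Gf tau xi eta 1) t x U).
  change (pd3 [Dt] tau t x U) with (pd3 [Dt] (Gf tau xi eta 0) t x U).
  split; lra.
Qed.

Definition Tp t := Derive T t.

Lemma xi_x t x u : pd3 [Dx] xi t x u = Tp t / 5.
Proof. destruct (S2 t x u) as [_ H]. rewrite VT0 in H. unfold Tp. lra. Qed.

Lemma xi_u t x u : pd3 [Du] xi t x u = 0.
Proof. apply (proj1 (S2 _ _ _)). Qed.

Lemma xi_form t x u : xi t x u = xi t 0 0 + x * Tp t / 5.
Proof.
  assert (K : forall y w, xi t y w - y * Tp t / 5 = xi t 0 0 - 0 * Tp t / 5).
  { apply (const2 (fun y w => xi t y w - y * Tp t / 5) (fun y w => pd3 [Dx] xi t y w - Tp t / 5)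
                 (fun y w => pd3 [Du] xi t y w - 0)).
    - intros a b. apply isd_minus; [apply (isd_x xi Hx [])|]. auto_derive; auto. req; field.
    - intros a b. apply isd_minus; [apply (isd_u xi Hx [])| apply isd_const].
    - intros; rewrite xi_x; ring.
    - intros; rewrite xi_u; ring. }
  specialize (K x u). lra.
Qed.

Lemma Z1 nx nu t x u : (1 <= nu)%nat \/ (2 <= nx)%nat -> pd3 (can nx nu) xi t x u = 0.
Proof.
  intros Hn. destruct nu as [|nu].
  - destruct nx as [|[|nx]]; try lia. rewrite can_x2. apply pd3_zero_inner.
    intros t' x' u'. simpl. rewrite (Derive_ext _ (fun _ => Tp t' / 5)); [apply Derive_const|].
    intros; apply xi_x.
  - rewrite can_u1. apply pd3_zero_inner. intros; apply xi_u.
Qed.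

Definition z3 (v : var) : bool :=
  match v with
  | VQ k => Nat.eqb k 2 || Nat.eqb k 3 || Nat.leb 5 k
  | VP k => Nat.leb 1 k
  | VA 0 nx nu => Nat.leb 1 (nx + nu)
  | VA 1 nx nu => Nat.leb 1 nu || Nat.leb 2 nx
  | _ => false end.

Ltac zatoms g Hk :=
  destruct g as [|[|[|g]]]; cbn [ivar envPt eA];
  repeat (first [rewrite Bool.orb_true_iff in Hk | rewrite Bool.andb_true_iff in Hk
                | rewrite Nat.leb_le in Hk | rewrite Nat.eqb_eq in Hk]);
  first [discriminate
        | apply Z0; lia
        | apply Z1; lia].

Lemma S3 t x U : pd3 [Dx; Du] eta t x U = 0 /\ pd3 [Du; Du] eta t x U = 0.
Proof.
  assert (Hz : forall a c, forall v, z3 v = true -> ivar (EN t x [U; a; 0; 0; c] [-(E t * U * a + Q t * U)]) v = 0).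
  { intros a c [g nx nu|k|k|g|i] Hk; cbn [z3] in Hk; try discriminate; try (zvq k Hk).
    zatoms g Hk. }
  get_stage H01 z3 t x [U; 0; 0; 0; 1] [-(E t * U * 0 + Q t * U)]. { apply Hz. }
  get_stage H00 z3 t x [U; 0; 0; 0; 0] [-(E t * U * 0 + Q t * U)]. { apply Hz. }
  get_stage H11 z3 t x [U; 1; 0; 0; 1] [-(E t * U * 1 + Q t * U)]. { apply Hz. }
  get_stage H10 z3 t x [U; 1; 0; 0; 0] [-(E t * U * 1 + Q t * U)]. { apply Hz. }
  change (pd3 [Dx; Du] eta t x U) with (pd3 (can 1 1) (Gf tau xi eta 2) t x U).
  change (pd3 [Du; Du] eta t x U) with (pd3 (can 0 2) (Gf tau xi eta 2) t x U).
  split; lra.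
Qed.

Definition bb t := pd3 [Du] eta t 0 0.

Lemma eta_u t x u : pd3 [Du] eta t x u = bb t.
Proof.
  unfold bb. apply (const2 (fun y w => pd3 [Du] eta t y w) (fun y w => pd3 [Dx; Du] eta t y w)
                 (fun y w => pd3 [Du; Du] eta t y w)).
  - intros; apply (isd_x eta He [Du]).
  - intros; apply (isd_u eta He [Du]).
  - intros; cbv beta; apply (proj1 (S3 _ _ _)).
  - intros; cbv beta; apply (proj2 (S3 _ _ _)).
Qed.

Lemma eta_form0 t x u : eta t x u = eta t x 0 + u * bb t.
Proof.
  assert (K : forall w, eta t x w - w * bb t = eta t x 0 - 0 * bb t).
  { intros w. apply (const_of_deriv0 (fun w => eta t x w - w * bb t)).
    intros z. eapply isd_eq. apply isd_minus; [apply (isd_u eta He [] t x z)|].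
    apply (is_derive_ext (fun w => bb t * w)); [intros; req; ring|]. apply is_derive_scal, is_derive_id.
    rewrite eta_u. unfold one; simpl. ring. }
  specialize (K u). lra.
Qed.

Lemma Z2a nx nu t x u : (2 <= nu)%nat \/ (nu = 1%nat /\ (1 <= nx)%nat) -> pd3 (can nx nu) eta t x u = 0.
Proof.
  intros [Hn|[-> Hn]].
  - destruct nu as [|[|nu]]; try lia. rewrite can_u2. apply pd3_zero_inner. intros; apply (proj2 (S3 _ _ _)).
  - destruct nx as [|nx]; try lia. rewrite can_x1u1. apply pd3_zero_inner. intros; apply (proj1 (S3 _ _ _)).
Qed.

Ltac zatoms2 g Hk :=
  destruct g as [|[|[|g]]]; cbn [ivar envPt eA];
  repeat (first [rewrite Bool.orb_true_iff in Hk | rewrite Bool.andb_true_iff in Hk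
                | rewrite Nat.leb_le in Hk | rewrite Nat.eqb_eq in Hk]);
  first [discriminate
        | apply Z0; lia
        | apply Z1; lia
        | apply Z2a; lia].

Definition z4 (v : var) : bool :=
  match v with
  | VQ k => Nat.eqb k 1 || Nat.eqb k 2 || Nat.leb 4 k
  | VP k => Nat.leb 1 k
  | VA 0 nx nu => Nat.leb 1 (nx + nu)
  | VA 1 nx nu => Nat.leb 1 nu || Nat.leb 2 nx
  | VA 2 nx nu => Nat.leb 2 nu || (Nat.eqb nu 1 && Nat.leb 1 nx)
  | _ => false end.

Lemma RA00 t x u : pd3 (can 0 0) (Gf tau xi eta 0) t x u = T t.
Proof. apply tau_T. Qed.
Lemma RX10 t x u : pd3 (can 1 0) (Gf tau xi eta 1) t x u = Tp t / 5.
Proof. apply xi_x. Qed.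
Lemma RT0 t x u : pd3 [Dt] (Gf tau xi eta 0) t x u = Tp t.
Proof. apply VT0. Qed.
Lemma RH01 t x u : pd3 (can 0 1) (Gf tau xi eta 2) t x u = bb t.
Proof. apply eta_u. Qed.

Lemma S4 t x : bb t = - 2 / 5 * Tp t /\ eta t x 0 = - (T t * Derive B t + 2 / 5 * Tp t * B t).
Proof.
  assert (Hz : forall U c, forall v, z4 v = true -> ivar (EN t x [U; 0; 0; c] [-(B t * c + U * c + Q t * U)]) v = 0).
  { intros U c [g nx nu|k|k|g|i] Hk; cbn [z4] in Hk; try discriminate; try (zvq k Hk).
    zatoms2 g Hk. }
  get_stage H01 z4 t x [0; 0; 0; 1] [-(B t * 1 + 0 * 1 + Q t * 0)]. { apply Hz. }
  get_stage H00 z4 t x [0; 0; 0; 0] [-(B t * 0 + 0 * 0 + Q t * 0)]. { apply Hz. }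
  get_stage H11 z4 t x [1; 0; 0; 1] [-(B t * 1 + 1 * 1 + Q t * 1)]. { apply Hz. }
  get_stage H10 z4 t x [1; 0; 0; 0] [-(B t * 0 + 1 * 0 + Q t * 1)]. { apply Hz. }
  assert (K0 : pd3 (can 0 0) (Gf tau xi eta 2) t x 0 = eta t x 0) by reflexivity.
  assert (K1 : pd3 (can 0 0) (Gf tau xi eta 2) t x 1 = eta t x 0 + 1 * bb t) by (apply eta_form0).
  rewrite ?RA00, ?RX10, ?RT0, ?RH01 in H01, H00, H11, H10.
  rewrite ?K0, ?K1 in H01, H00, H11, H10.
  split; lra.
Qed.

Definition sig t := eta t 0 0.
Definition del t := xi t 0 0.
Definition Tpp t := Derive Tp t.

Lemma T_smooth : smooth1 T.
Proof. apply (slice_smooth tau Ht 0 0). Qed.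
Lemma sig_smooth : smooth1 sig.
Proof. apply (slice_smooth eta He 0 0). Qed.
Lemma del_smooth : smooth1 del.
Proof. apply (slice_smooth xi Hx 0 0). Qed.

Lemma Tp_d t : is_derive Tp t (Tpp t).
Proof.
  unfold Tpp. apply Derive_correct.
  apply (ex_derive_ext (Derive_n T 1)); [reflexivity|]. apply T_smooth.
Qed.
Lemma sig_d t : is_derive sig t (Derive sig t).
Proof. apply Derive_correct. apply (T_smooth 0%nat t) || apply (sig_smooth 0%nat t). Qed.
Lemma del_d t : is_derive del t (Derive del t).
Proof. apply Derive_correct. apply (del_smooth 0%nat t). Qed.

Lemma eta_form t x u : eta t x u = sig t - 2 / 5 * Tp t * u.
Proof.
  rewrite eta_form0. destruct (S4 t x) as [Hb Hx0]. destruct (S4 t 0) as [_ H0].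
  unfold sig. rewrite Hx0, H0, Hb. field.
Qed.

Lemma Z2b nx nu t x u : (1 <= nx)%nat /\ nu = 0%nat -> pd3 (can nx nu) eta t x u = 0.
Proof.
  intros [Hn ->]. destruct nx as [|nx]; try lia. rewrite can_x1. apply pd3_zero_inner.
  intros t' x' u'. simpl. rewrite (Derive_ext _ (fun _ => sig t' - 2 / 5 * Tp t' * u')); [apply Derive_const|].
  intros; apply eta_form.
Qed.

Ltac zatoms3 g Hk :=
  destruct g as [|[|[|g]]]; cbn [ivar envPt eA];
  repeat (first [rewrite Bool.orb_true_iff in Hk | rewrite Bool.andb_true_iff in Hk
                | rewrite Nat.leb_le in Hk | rewrite Nat.eqb_eq in Hk]);
  repeat match type of Hk with _ \/ _ => destruct Hk as [Hk|Hk] end;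
  first [discriminate
        | apply Z0; lia
        | apply Z1; lia
        | apply Z2a; lia
        | apply Z2b; lia].

Definition z6 (v : var) : bool :=
  match v with
  | VQ k => Nat.leb 2 k
  | VP k => Nat.leb 1 k
  | VA 0 nx nu => Nat.leb 1 (nx + nu)
  | VA 1 nx nu => Nat.leb 1 nu || Nat.leb 2 nx
  | VA 2 nx nu => Nat.leb 2 nu || (Nat.eqb nu 1 && Nat.leb 1 nx) || (Nat.leb 1 nx && Nat.eqb nu 0)
  | _ => false end.

Lemma RH00 t x u : pd3 (can 0 0) (Gf tau xi eta 2) t x u = sig t - 2 / 5 * Tp t * u.
Proof. apply eta_form. Qed.

Lemma RT2 t x u : pd3 [Dt] (Gf tau xi eta 2) t x u = Derive sig t - 2 / 5 * Tpp t * u.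
Proof.
  simpl. rewrite (Derive_ext _ (fun s => sig s - 2 / 5 * Tp s * u)); [|intros; apply eta_form].
  apply is_derive_unique. eapply isd_eq. apply isd_minus; [apply sig_d|].
  apply (is_derive_ext (fun s => (-2/5*u) * Tp s * -1)); [intros; req; field|].
  apply isd_mult; [apply is_derive_scal, Tp_d| apply isd_const].
  req; field.
Qed.

Lemma RT1 t x u : pd3 [Dt] (Gf tau xi eta 1) t x u = Derive del t + x * Tpp t / 5.
Proof.
  simpl. rewrite (Derive_ext _ (fun s => del s + (x / 5) * Tp s)); [|intros; rewrite xi_form; unfold del; field].
  apply is_derive_unique. eapply isd_eq. apply isd_plus; [apply del_d|].
  apply is_derive_scal, Tp_d.
  req; field.
Qed.

Lemma S6 t x :
  sig t * E t - Derive del t - x * Tpp t / 5 = 0 /\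
  T t * Derive E t + 2 / 5 * Tp t * E t = 0 /\
  sig t * Q t + Derive sig t = 0 /\
  T t * Derive Q t + Tp t * Q t - 2 / 5 * Tpp t = 0.
Proof.
  assert (Hz : forall U a, forall v, z6 v = true -> ivar (EN t x [U; a] [-(E t * U * a + Q t * U)]) v = 0).
  { intros U a [g nx nu|k|k|g|i] Hk; cbn [z6] in Hk; try discriminate; try (zvq k Hk).
    zatoms3 g Hk. }
  get_stage H01 z6 t x [0; 1] [-(E t * 0 * 1 + Q t * 0)]. { apply Hz. }
  get_stage H00 z6 t x [0; 0] [-(E t * 0 * 0 + Q t * 0)]. { apply Hz. }
  get_stage H11 z6 t x [1; 1] [-(E t * 1 * 1 + Q t * 1)]. { apply Hz. }
  get_stage H10 z6 t x [1; 0] [-(E t * 1 * 0 + Q t * 1)]. { apply Hz. }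
  rewrite ?RA00, ?RX10, ?RT0, ?RH01, ?RH00, ?RT2, ?RT1 in H01, H00, H11, H10.
  rewrite (proj1 (S4 t x)) in H01, H00, H11, H10.
  repeat split; lra.
Qed.

End Stages.

Section IfDir.
Variables (B E Q : R -> R) (F : R) (tau xi eta : R -> R -> R -> R).
Variables (k2 k3 : R) (delta sigma : R -> R).
Hypotheses (Hd : smooth1 delta) (Hs : smooth1 sigma).
Hypothesis Hforms : forall t x u,
  tau t x u = k2 * t + k3 /\ xi t x u = k2 / 5 * x + delta t /\ eta t x u = sigma t - 2 * k2 / 5 * u.
Variable u : R -> R -> R.
Hypothesis Hu : smooth2 u.

Lemma ex_x ds t x : ex_derive (fun y => pd2 ds u t y) x.
Proof. apply (Hu ds t x). Qed.
Lemma ex_t ds t x : ex_derive (fun s => pd2 ds u s x) t.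
Proof. apply (Hu ds t x). Qed.

Lemma isd_xn n t x : is_derive (fun y => pxn n u t y) x (pxn (S n) u t x).
Proof.
  apply Derive_correct. apply (ex_derive_ext (fun y => pd2 (repeat false n) u t y)).
  - intros; symmetry; apply pxn_pd2.
  - apply ex_x.
Qed.
Lemma isd_xnt n t x : is_derive (fun y => pxn n (pt u) t y) x (pxn (S n) (pt u) t x).
Proof.
  apply Derive_correct. apply (ex_derive_ext (fun y => pd2 (repeat false n ++ [true]) u t y)).
  - intros; rewrite pxn_pd2, pd2_app; reflexivity.
  - apply ex_x.
Qed.

Lemma charQ_form t x : charQ tau xi eta u t x =
  sigma t - 2 * k2 / 5 * u t x - (k2 * t + k3) * pt u t x - (k2 / 5 * x + delta t) * px u t x.
Proof.
  unfold charQ. destruct (Hforms t x (u t x)) as [H1 [H2 H3]]. rewrite H1, H2, H3. reflexivity.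
Qed.

Lemma pxn_charQ n t x : pxn (S n) (charQ tau xi eta u) t x =
  - (INR (S n) + 2) * k2 / 5 * pxn (S n) u t x - (k2 * t + k3) * pxn (S n) (pt u) t x
  - (k2 / 5 * x + delta t) * pxn (S (S n)) u t x.
Proof.
  revert x. induction n as [|n IH]; intros x.
  - simpl pxn at 1. unfold px at 1.
    rewrite (Derive_ext _ _ _ (fun y => charQ_form t y)).
    apply is_derive_unique. eapply isd_eq.
    + apply isd_minus; [apply isd_minus; [apply isd_minus|]|].
      * apply isd_const.
      * apply is_derive_scal. apply (isd_xn 0).
      * apply is_derive_scal. apply (isd_xnt 0).
      * apply isd_mult; [|apply (isd_xn 1)]. auto_derive; auto.
    + simpl. req. field.
  - change (pxn (S (S n)) (charQ tau xi eta u) t x) with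
      (Derive (fun y => pxn (S n) (charQ tau xi eta u) t y) x).
    rewrite (Derive_ext _ _ _ IH).
    apply is_derive_unique. eapply isd_eq.
    + apply isd_minus; [apply isd_minus|].
      * apply is_derive_scal. apply (isd_xn (S n)).
      * apply is_derive_scal. apply (isd_xnt (S n)).
      * apply isd_mult; [|apply (isd_xn (S (S n)))]. auto_derive; auto.
    + rewrite !S_INR. req. field.
Qed.

Lemma phi_form n t x : phi_xn tau xi eta u (S n) t x = - (INR (S n) + 2) * k2 / 5 * pxn (S n) u t x.
Proof.
  unfold phi_xn. rewrite pxn_charQ. destruct (Hforms t x (u t x)) as [H1 [H2 _]]. rewrite H1, H2.
  ring.
Qed.

Lemma schwarz_u t x : pt (px u) t x = px (pt u) t x.
Proof.
  unfold pt, px. apply (Schwarz u t x).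
  - apply locally_2d_forall. intros a b. repeat split.
    + apply (ex_t [] a b).
    + apply (ex_x [] a b).
    + apply (ex_t [false] a b).
    + apply (ex_x [true] a b).
  - apply continuity_2d_pt_filterlim. apply (Hu [true; false] t x).
  - apply continuity_2d_pt_filterlim. apply (Hu [false; true] t x).
Qed.

Lemma isd_t0 ds t x : is_derive (fun s => pd2 ds u s x) t (pt (pd2 ds u) t x).
Proof. apply Derive_correct, ex_t. Qed.

Lemma phit_form t x : phi_t tau xi eta u t x = Derive sigma t - 7 * k2 / 5 * pt u t x - Derive delta t * px u t x.
Proof.
  unfold phi_t. unfold pt at 1.
  rewrite (Derive_ext _ _ _ (fun s => charQ_form s x)).
  erewrite is_derive_unique.
  2:{ apply isd_minus; [apply isd_minus; [apply isd_minus|]|].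
      - apply Derive_correct. apply (Hs 0%nat).
      - apply is_derive_scal. apply (isd_t0 []).
      - apply isd_mult; [auto_derive; auto|]. apply (isd_t0 [true]).
      - apply isd_mult; [|apply (isd_t0 [false])].
        apply isd_plus; [apply isd_const|]. apply Derive_correct. apply (Hd 0%nat). }
  destruct (Hforms t x (u t x)) as [H1 [H2 _]]. rewrite H1, H2.
  simpl pd2. rewrite schwarz_u.
  req. field.
Qed.

End IfDir.

Lemma if_dir (B E Q : R -> R) (F : R) (tau xi eta : R -> R -> R -> R) k2 k3 delta sigma :
  smooth1 delta -> smooth1 sigma ->
  (forall t x u, tau t x u = k2 * t + k3 /\ xi t x u = k2 / 5 * x + delta t /\ eta t x u = sigma t - 2 * k2 / 5 * u) ->
  (forall t,
          5 * (k2 * t + k3) * Derive B t + 2 * k2 * B t + 5 * sigma t = 0 /\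
          (k2 * t + k3) * Derive E t + 2 * k2 / 5 * E t = 0 /\
          sigma t * E t - Derive delta t = 0 /\
          sigma t * Q t + Derive sigma t = 0 /\
          (k2 * t + k3) * Derive Q t + k2 * Q t = 0) ->
  is_lie_point_symmetry B E Q F tau xi eta.
Proof.
  intros Hd Hs Hforms Hc u Hu t x HD.
  destruct (Hc t) as [C1 [C2 [C3 [C4 C5]]]].
  unfold prDelta. cbv zeta.
  rewrite (phi_form _ _ _ _ _ _ _ Hforms u Hu 4), (phi_form _ _ _ _ _ _ _ Hforms u Hu 2),
          (phi_form _ _ _ _ _ _ _ Hforms u Hu 0), (phi_form _ _ _ _ _ _ _ Hforms u Hu 1),
          (phit_form _ _ _ _ _ _ _ Hd Hs Hforms u Hu).
  destruct (Hforms t x (u t x)) as [H1 [_ H3]]. rewrite H1, H3.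
  unfold Delta in HD.
  change (pxn 1 u t x) with (px u t x).
  simpl INR.
  lazymatch goal with |- ?P = 0 =>
  lazymatch type of HD with ?D = 0 =>
  lazymatch type of C1 with ?c1 = 0 =>
  lazymatch type of C2 with ?c2 = 0 =>
  lazymatch type of C3 with ?c3 = 0 =>
  lazymatch type of C4 with ?c4 = 0 =>
  lazymatch type of C5 with ?c5 = 0 =>
    assert (Hid : P = -7 * k2 / 5 * D + pxn 3 u t x * c1 / 5 + u t x * px u t x * c2
                       + px u t x * c3 + c4 + u t x * c5) by field;
    rewrite Hid, HD, C1, C2, C3, C4, C5; field
  end end end end end end end.
Qed.

Lemma only_if (B E Q : R -> R) (F : R) (tau xi eta : R -> R -> R -> R) :
  smooth3 tau -> smooth3 xi -> smooth3 eta ->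
  is_lie_point_symmetry B E Q F tau xi eta ->
  exists (k2 k3 : R) (delta sigma : R -> R),
       smooth1 delta /\ smooth1 sigma /\
       (forall t x u,
          tau t x u = k2 * t + k3 /\
          xi t x u = k2 / 5 * x + delta t /\
          eta t x u = sigma t - 2 * k2 / 5 * u) /\
       (forall t,
          5 * (k2 * t + k3) * Derive B t + 2 * k2 * B t + 5 * sigma t = 0 /\
          (k2 * t + k3) * Derive E t + 2 * k2 / 5 * E t = 0 /\
          sigma t * E t - Derive delta t = 0 /\
          sigma t * Q t + Derive sigma t = 0 /\
          (k2 * t + k3) * Derive Q t + k2 * Q t = 0).
Proof.
  intros Ht Hx He Hsym.
  assert (Hpp : forall t, Tpp tau t = 0).
  { intros t. destruct (S6 B E Q F tau xi eta Ht Hx He Hsym t 0) as [A0 _].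
    destruct (S6 B E Q F tau xi eta Ht Hx He Hsym t 1) as [A1 _]. lra. }
  assert (HTp : forall t, Tp tau t = Tp tau 0).
  { intros t. apply const_of_deriv0. intros s. eapply isd_eq; [apply Tp_d; auto| apply Hpp]. }
  assert (HT : forall t, T tau t = Tp tau 0 * t + T tau 0).
  { intros t.
    assert (K : T tau t - Tp tau 0 * t = T tau 0 - Tp tau 0 * 0).
    { apply (const_of_deriv0 (fun s => T tau s - Tp tau 0 * s)). intros s.
      eapply isd_eq. apply isd_minus.
      - apply Derive_correct. apply (T_smooth tau Ht 0%nat s).
      - apply is_derive_scal, is_derive_id.
      - change (Derive (Derive_n (T tau) 0) s) with (Tp tau s). change (Derive (T tau) s) with (Tp tau s). rewrite (HTp s). unfold one; simpl. ring. }
    lra. }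
  exists (Tp tau 0), (T tau 0), (del xi), (sig eta).
  split; [apply del_smooth; auto|]. split; [apply sig_smooth; auto|]. split.
  - intros t x u. rewrite (tau_T B E Q F tau xi eta Ht Hx He Hsym), (xi_form B E Q F tau xi eta Ht Hx He Hsym),
      (eta_form B E Q F tau xi eta Ht Hx He Hsym).
    rewrite (HT t), (HTp t). unfold del. split; [ring|split; field].
  - intros t.
    destruct (S6 B E Q F tau xi eta Ht Hx He Hsym t 0) as [C1 [C2 [C3 C4]]].
    destruct (S4 B E Q F tau xi eta Ht Hx He Hsym t 0) as [_ C0].
    rewrite Hpp in C1, C4.
    rewrite <- (HT t). rewrite <- (HTp t).
    change (eta t 0 0) with (sig eta t) in C0.
    repeat split; lra.
Qed.

Theorem mainTheorem5 :
  forall (B E Q : R -> R) (F : R),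
    F <> 0 -> smooth1 B -> smooth1 E -> smooth1 Q ->
  forall tau xi eta : R -> R -> R -> R,
    smooth3 tau -> smooth3 xi -> smooth3 eta ->
    (is_lie_point_symmetry B E Q F tau xi eta <->
     exists (k2 k3 : R) (delta sigma : R -> R),
       smooth1 delta /\ smooth1 sigma /\
       (forall t x u,
          tau t x u = k2 * t + k3 /\
          xi t x u = k2 / 5 * x + delta t /\
          eta t x u = sigma t - 2 * k2 / 5 * u) /\
       (forall t,
          5 * (k2 * t + k3) * Derive B t + 2 * k2 * B t + 5 * sigma t = 0 /\
          (k2 * t + k3) * Derive E t + 2 * k2 / 5 * E t = 0 /\
          sigma t * E t - Derive delta t = 0 /\
          sigma t * Q t + Derive sigma t = 0 /\
          (k2 * t + k3) * Derive Q t + k2 * Q t = 0)).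
Proof.
  intros B E Q F HF HB HE HQ tau xi eta Ht Hx He. split.
  - apply only_if; auto.
  - intros [k2 [k3 [delta [sigma [Hd [Hs [Hf Hc]]]]]]].
    apply (if_dir B E Q F tau xi eta k2 k3 delta sigma Hd Hs Hf Hc).
Qed.
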